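(* Consider the following model. A principal P and an agent A interact over two periods $t\in\{1,2\}$. States $\omega_t\in\{0,1\}$ satisfy $\Pr[\omega_1=1]=\mu_0\in(0,1)$ and $\Pr[\omega_2=\omega\mid\omega_1=\omega]=\rho\in(1/2,1)$; neither player observes states directly. In each period A chooses $e_t\in\{0,1\}$; if $e_t=1$ he observes $\omega_t$, if $e_t=0$ he observes $\omega_t$ with probability $\pi\in(0,1)$ and nothing otherwise. A then reports $r_t\in\{\varnothing,\omega_t\}$ if he observed $\omega_t$ and $r_t=\varnothing$ otherwise. At the end of period 2, P chooses $x$. Payoffs: P gets $\mathbb{1}[x=\omega_2]-k(e_1+e_2)$, A gets $x-c(e_1+e_2)$, $c,k>0$. Let $\kappa=k/(1-\pi)$, $\gamma=c/(1-\pi)$, $\mu_2(\varnothing)=\rho\mu_0+(1-\rho)(1-\mu_0)$, and assume $$\kappa\in(1-\rho,\min\{\mu_2(\varnothing),1-\mu_2(\varnothing)\}],\qquad \gamma\in(1-\rho,\mu_2(\varnothing)].$$ Consider the mechanism $m^*$ with $\sigma_1=0$, $\sigma_2(r_1)=\mathbb{1}[r_1=\varnothing]$, and $\hat x(r_1,1)=1$, $\hat x(r_1,0)=0$ for all $r_1$, $\hat x(1,\varnothing)=1$, $\hat x(0,\varnothing)=0$, $\hat x(\varnothing,\varnothing)=0$. Consider A's deviation strategy: test in period 1; report $r_1=1$ if $\omega_1=1$ and $r_1=\varnothing$ otherwise; never test in period 2; in period 2 report $r_2=1$ if $\omega_2=1$ is observed and $r_2=\varnothing$ otherwise. Then this deviation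 gives A a strictly higher expected payoff than his best strategy among those that do not test in period 1 if and only if $$\gamma<\bar\gamma:=\frac{(1-\rho)[\mu_0-(1-\mu_0)(1-\pi)]}{\pi}.$$
   Context: The mechanism $m^*$ is the baseline (first-best, efficient-assignment) mechanism for this range of $\kappa$, modified so that no report after a requested test yields assignment $0$. The principal commits to the mechanism; A best-responds to it. *)

(* Defs.v *)
From mathcomp Require Import all_boot all_order all_algebra.
Set Implicit Arguments. Unset Strict Implicit. Unset Printing Implicit Defensive.
Import Order.TTheory GRing.Theory Num.Theory.
Local Open Scope ring_scope.

(* States, efforts: bool (true = 1).  Observations / reports: option bool,
   None = "nothing observed" / the empty report (varnothing). *)

Definition mstar_sigma1 : bool := false.
Definition mstar_sigma2 (r1 : option bool) : bool := r1 == None.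
Definition mstar_xhat (r1 r2 : option bool) : bool :=
  match r2 with
  | Some true => true
  | Some false => false
  | None => match r1 with
            | Some true => true
            | _ => false
            end
  end.

(* Period-2 behaviour may depend on everything
   A knows: his period-1 observation o1 (his report r1 and P's recommendation
   sigma2(r1) are functions of o1 under the strategy). *)
Record strategy := Strategy {
  eff1 : bool;
  rep1 : option bool -> option bool;
  eff2 : option bool -> bool;
  rep2 : option bool -> option bool -> option bool
}.

Definition feasible (s : strategy) : Prop :=
  (forall o, rep1 s o = None \/ rep1 s o = o) /\
  (forall o1 o2, rep2 s o1 o2 = None \/ rep2 s o1 o2 = o2).

Section Model.
Variables (R : realFieldType) (mu0 rho pi c : R).

Definition prior (w : bool) : R := if w then mu0 else 1 - mu0.
Definition trans (w w' : bool) : R := if w' == w then rho else 1 - rho.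
Definition obsP (e w : bool) (o : option bool) : R :=
  match o with
  | Some v => if v == w then (if e then 1 else pi) else 0
  | None => if e then 0 else 1 - pi
  end.

Definition payoffA (s : strategy) : R :=
  \sum_(w1 : bool) \sum_(w2 : bool) \sum_(o1 : option bool) \sum_(o2 : option bool)
    prior w1 * trans w1 w2 * obsP (eff1 s) w1 o1 * obsP (eff2 s o1) w2 o2 *
    ((nat_of_bool (mstar_xhat (rep1 s o1) (rep2 s o1 o2)))%:R
      - c * ((nat_of_bool (eff1 s))%:R + (nat_of_bool (eff2 s o1))%:R)).

Definition bestNoTest (s : strategy) : Prop :=
  feasible s /\ eff1 s = false /\
  forall s', feasible s' -> eff1 s' = false -> payoffA s' <= payoffA s.

Definition mu2empty : R := rho * mu0 + (1 - rho) * (1 - mu0).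
Definition gammabar : R := (1 - rho) * (mu0 - (1 - mu0) * (1 - pi)) / pi.

End Model.

Definition deviation : strategy :=
  Strategy true
    (fun o => if o is Some true then Some true else None)
    (fun _ => false)
    (fun _ o2 => if o2 is Some true then Some true else None).

(* Main.v *)
Require Import Defs.
From mathcomp Require Import all_boot all_order all_algebra.
From mathcomp Require Import ring lra.
Import Order.TTheory GRing.Theory Num.Theory.
Local Open Scope ring_scope.

Lemma sum_opt (R : realFieldType) (F : option bool -> R) :
  \sum_(o : option bool) F o = F None + F (Some true) + F (Some false).
Proof.
rewrite (perm_big [:: None; Some true; Some false]) /=.
  by rewrite !big_cons big_nil addr0 addrA.
apply: uniq_perm; first exact: index_enum_uniq.
  by [].
by move=> x; rewrite mem_index_enum; case: x => [[]|].
Qed.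

Definition xv {R : realFieldType} (r1 r2 : option bool) : R :=
  (nat_of_bool (mstar_xhat r1 r2))%:R : R.

Definition Inner {R : realFieldType} (pi c q : R) (e : bool) (r1 a b n : option bool) : R :=
  q * (obsP pi e true (Some true) * xv r1 a + obsP pi e true None * xv r1 n)
  + (1 - q) * (obsP pi e false (Some false) * xv r1 b + obsP pi e false None * xv r1 n)
  - c * (nat_of_bool e)%:R.

Lemma payoff_dec (R : realFieldType) (mu0 rho pi c : R) (s : strategy) :
  eff1 s = false ->
  payoffA mu0 rho pi c s =
    mu0 * pi * Inner pi c rho (eff2 s (Some true)) (rep1 s (Some true))
       (rep2 s (Some true) (Some true)) (rep2 s (Some true) (Some false)) (rep2 s (Some true) None)
  + (1 - mu0) * pi * Inner pi c (1 - rho) (eff2 s (Some false)) (rep1 s (Some false))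
       (rep2 s (Some false) (Some true)) (rep2 s (Some false) (Some false)) (rep2 s (Some false) None)
  + (1 - pi) * Inner pi c (mu2empty mu0 rho) (eff2 s None) (rep1 s None)
       (rep2 s None (Some true)) (rep2 s None (Some false)) (rep2 s None None).
Proof.
move=> E; rewrite /payoffA E /Inner /xv /mu2empty /trans /prior.
rewrite !big_bool /= !sum_opt /=.
case: (eff2 s (Some true)); case: (eff2 s (Some false)); case: (eff2 s None) => /=. all: ring.
Qed.

Lemma bound_true (R : realFieldType) (rho pi c : R) e r1 a b n :
  0 <= rho <= 1 -> 0 <= pi <= 1 -> 0 < c ->
  (r1 = None \/ r1 = Some true) -> (a = None \/ a = Some true) ->
  (b = None \/ b = Some false) -> n = None ->
  Inner pi c rho e r1 a b n <= 1.
Proof.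
move=> /andP[? ?] /andP[? ?] ? [->|->] [->|->] [->|->] ->; case: e;
  rewrite /Inner /xv /obsP /=; nra.
Qed.

Lemma bound_false (R : realFieldType) (rho pi c : R) e r1 a b n :
  0 <= rho <= 1 -> 0 <= pi <= 1 -> (1 - pi) * (1 - rho) < c ->
  (r1 = None \/ r1 = Some false) -> (a = None \/ a = Some true) ->
  (b = None \/ b = Some false) -> n = None ->
  Inner pi c (1 - rho) e r1 a b n <= pi * (1 - rho).
Proof.
move=> /andP[? ?] /andP[? ?] ? [->|->] [->|->] [->|->] ->; case: e;
  rewrite /Inner /xv /obsP /=; nra.
Qed.

Lemma bound_none (R : realFieldType) (q pi c : R) e r1 a b n :
  0 <= q <= 1 -> 0 <= pi <= 1 -> c <= (1 - pi) * q ->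
  r1 = None -> (a = None \/ a = Some true) ->
  (b = None \/ b = Some false) -> n = None ->
  Inner pi c q e r1 a b n <= q - c.
Proof.
move=> /andP[? ?] /andP[? ?] ? -> [->|->] [->|->] ->; case: e;
  rewrite /Inner /xv /obsP /=; nra.
Qed.

Definition sopt : strategy :=
  Strategy false
    (fun o => if o is Some true then Some true else None)
    (fun o => o == None)
    (fun _ o2 => if o2 is Some true then Some true else None).

Lemma sopt_feasible : feasible sopt.
Proof. by split => [[[]|]|o1 [[]|]] /=; auto. Qed.

Definition V0 {R : realFieldType} (mu0 rho pi c : R) : R :=
  mu0 * pi + (1 - mu0) * pi * (pi * (1 - rho)) + (1 - pi) * (mu2empty mu0 rho - c).

Lemma payoff_sopt (R : realFieldType) (mu0 rho pi c : R) :
  payoffA mu0 rho pi c sopt = V0 mu0 rho pi c.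
Proof. by rewrite payoff_dec // /Inner /xv /obsP /V0 /=; ring. Qed.

Lemma payoff_dev (R : realFieldType) (mu0 rho pi c : R) :
  payoffA mu0 rho pi c deviation = mu0 + (1 - mu0) * pi * (1 - rho) - c.
Proof.
rewrite /payoffA /deviation /= !big_bool /= !sum_opt /trans /prior /obsP /=; ring.
Qed.

Lemma payoff_le (R : realFieldType) (mu0 rho pi c : R) s :
  0 <= mu0 <= 1 -> 0 <= rho <= 1 -> 0 <= pi <= 1 -> 0 < c ->
  (1 - pi) * (1 - rho) < c -> c <= (1 - pi) * mu2empty mu0 rho ->
  feasible s -> eff1 s = false -> payoffA mu0 rho pi c s <= V0 mu0 rho pi c.
Proof.
move=> hm hr hp hc h1 h2 [F1 F2] E.
have hn : forall o, rep2 s o None = None by move=> o; case: (F2 o None).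
have hmu : 0 <= mu2empty mu0 rho <= 1.
  move: hm hr => /andP[? ?] /andP[? ?]; apply/andP; rewrite /mu2empty; split; nra.
have hr' : 0 <= 1 - rho <= 1 by move: hr => /andP[? ?]; apply/andP; split; lra.
rewrite payoff_dec // /V0.
have hm' := hm; have hp' := hp; move: hm' hp' => /andP[? ?] /andP[? ?].
apply: lerD; first apply: lerD.
- rewrite -[X in _ <= X]mulr1; apply: ler_wpM2l; first by nra.
  exact: (@bound_true _ _ _ _ _ _ _ _ _ hr hp hc (F1 _) (F2 _ _) (F2 _ _) (hn _)).
- apply: ler_wpM2l; first by nra.
  exact: (@bound_false _ _ _ _ _ _ _ _ _ hr hp h1 (F1 _) (F2 _ _) (F2 _ _) (hn _)).
- apply: ler_wpM2l; first by lra.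
  have r1n : rep1 s None = None by case: (F1 None).
  exact: (@bound_none _ _ _ _ _ _ _ _ _ hmu hp h2 r1n (F2 _ _) (F2 _ _) (hn _)).
Qed.

Theorem proposition2 (R : realFieldType) (mu0 rho pi c k : R) :
  0 < mu0 < 1 -> 2^-1 < rho < 1 -> 0 < pi < 1 -> 0 < c -> 0 < k ->
  1 - rho < k / (1 - pi) ->
  k / (1 - pi) <= Num.min (mu2empty mu0 rho) (1 - mu2empty mu0 rho) ->
  1 - rho < c / (1 - pi) -> c / (1 - pi) <= mu2empty mu0 rho ->
  (exists s, bestNoTest mu0 rho pi c s) /\
  (forall s, bestNoTest mu0 rho pi c s ->
     (payoffA mu0 rho pi c s < payoffA mu0 rho pi c deviation
        <-> c / (1 - pi) < gammabar mu0 rho pi)).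
Proof.
move=> /andP[m0 m1] /andP[r0 r1] /andP[p0 p1] hc hk _ _ h1 h2.
have hpi : 0 < 1 - pi by lra.
have h1' : (1 - pi) * (1 - rho) < c by rewrite mulrC -ltr_pdivlMr.
have h2' : c <= (1 - pi) * mu2empty mu0 rho by rewrite mulrC -ler_pdivrMr.
have r0' : 0 < rho by apply: lt_trans r0; rewrite invr_gt0.
have hm : 0 <= mu0 <= 1 by apply/andP; split; lra.
have hr : 0 <= rho <= 1 by apply/andP; split; lra.
have hp : 0 <= pi <= 1 by apply/andP; split; lra.
have Hle := @payoff_le _ _ _ _ _ _ hm hr hp hc h1' h2'.
split.
  exists sopt; split; first exact: sopt_feasible.
  split => // s' F E; rewrite payoff_sopt; exact: Hle.
move=> s [F [E B]].
have -> : payoffA mu0 rho pi c s = V0 mu0 rho pi c.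
  apply/eqP; rewrite eq_le Hle //= -payoff_sopt; apply: B => //.
  exact: sopt_feasible.
rewrite payoff_dev /V0 /gammabar ltr_pdivlMr // [c / _ * _]mulrAC ltr_pdivrMr //.
rewrite /mu2empty; split => H; nra.
Qed.
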